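(* Let $n\ge1$, $q$ a prime power, and let $\mathcal{F}$ be a covering of $[n]$ with no redundant basic set. The $\mathcal{F}$-combinatorial metric $d_{\mathcal{F}}$ on $\mathbb{F}_q^n$ admits a MacWilliams-type identity if and only if $\mathcal{F}$ is a $k$-partition of $[n]$ for some $k$.
   Context: For a covering $\mathcal{F}$ of $[n]$ (a family of subsets, called basic sets, whose union is $[n]$) and $x\in\mathbb{F}_q^n$ with $\mathrm{supp}(x)=\{i:x_i\neq0\}$, $\mathrm{wt}_{\mathcal{F}}(x)=\min\{|\mathcal{A}|:\mathcal{A}\subset\mathcal{F},\ \mathrm{supp}(x)\subset\bigcup_{A\in\mathcal{A}}A\}$ and $d_{\mathcal{F}}(x,y)=\mathrm{wt}_{\mathcal{F}}(x-y)$. A basic set $A$ is redundant if $A\subsetneq B$ for some $B\in\mathcal{F}$. $\mathcal{F}$ is a $k$-partition if it is a partition of $[n]$ all of whose blocks have cardinality $k$. For a linear code $\mathcal{C}\subset\mathbb{F}_q^n$, $\mathcal{C}^\perp=\{u: \sum_i u_ic_i=0\ \forall c\in\mathcal{C}\}$ and $W_{\mathcal{C}}(x,y)=\sum_{c\in\mathcal{C}}x^{D-\mathrm{wt}_{\mathcal{F}}(c)}y^{\mathrm{wt}_{\mathcal{F}}(c)}$ with $D=\max_{c\in\mathcal{C}}\mathrm{wt}_{\mathcal{F}}(c)$. The metric $d_{\mathcal{F}}$ admits a MacWilliams-type identity if for all linear codes $\mathcal{C}_1,\mathcal{C}_2\subset\mathbb{F}_q^n$, $W_{\mathcal{C}_1}=W_{\mathcal{C}_2}$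 implies $W_{\mathcal{C}_1^\perp}=W_{\mathcal{C}_2^\perp}$. *)

(* Defs.v *)
From HB Require Import structures.
From mathcomp Require Import all_boot all_order all_algebra all_field.

Set Implicit Arguments. Unset Strict Implicit. Unset Printing Implicit Defensive.
Import GRing.Theory.
Local Open Scope ring_scope.

Section CombMetric.
Variables (K : finFieldType) (n : nat).

Definition supp (x : 'rV[K]_n) : {set 'I_n} := [set i | x 0 i != 0].

Definition covering (F : {set {set 'I_n}}) : Prop := cover F = [set: 'I_n].

Definition redundant (F : {set {set 'I_n}}) (A : {set 'I_n}) : Prop :=
  A \in F /\ exists2 B, B \in F & A \proper B.

(* F-weight: the least number of basic sets covering supp x
   (for a covering F, F itself covers, so the minimum is over a nonempty
    family; #|F| is only the neutral starting value of minn) *)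
Definition wtF (F : {set {set 'I_n}}) (x : 'rV[K]_n) : nat :=
  \big[minn/#|F|]_(A : {set {set 'I_n}} | (A \subset F) && (supp x \subset cover A))
     #|A|.

Definition dF (F : {set {set 'I_n}}) (x y : 'rV[K]_n) : nat := wtF F (x - y).

Definition k_partition (F : {set {set 'I_n}}) (k : nat) : Prop :=
  partition F [set: 'I_n] /\ forall A, A \in F -> #|A| = k.

Definition dual_code (C : {vspace 'rV[K]_n}) : {set 'rV[K]_n} :=
  [set u : 'rV[K]_n | [forall c : 'rV[K]_n, (c \in C) ==> (\sum_(i < n) u 0 i * c 0 i == 0)]].

(* weight enumerator W_S(x,y) = sum_{c in S} x^(D - wt c) y^(wt c),
   D = max weight; as a bivariate polynomial in {poly {poly int}}:
   inner variable = x, outer variable = y *)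
Definition maxwt (F : {set {set 'I_n}}) (S : {set 'rV[K]_n}) : nat :=
  \max_(c in S) wtF F c.

Definition wenum (F : {set {set 'I_n}}) (S : {set 'rV[K]_n}) : {poly {poly int}} :=
  \sum_(c in S) (('X ^+ (maxwt F S - wtF F c) : {poly int})%:P * 'X ^+ (wtF F c)).

Definition code_set (C : {vspace 'rV[K]_n}) : {set 'rV[K]_n} := [set c | c \in C].

Definition admits_MacWilliams (F : {set {set 'I_n}}) : Prop :=
  forall C1 C2 : {vspace 'rV[K]_n},
    wenum F (code_set C1) = wenum F (code_set C2) ->
    wenum F (dual_code C1) = wenum F (dual_code C2).

End CombMetric.

(* Main.v *)
Require Import Defs.
From HB Require Import structures.
From mathcomp Require Import all_boot all_order all_algebra all_field.
Set Implicit Arguments. Unset Strict Implicit. Unset Printing Implicit Defensive.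
Import GRing.Theory Num.Theory.
Local Open Scope ring_scope.

Section Gen.
Variables (K : finFieldType) (n : nat).
Implicit Types (F : {set {set 'I_n}}) (x u : 'rV[K]_n).

Lemma wtF_le_card F x : (wtF F x <= #|F|)%N.
Proof.
rewrite /wtF; apply: (big_rec (fun y => y <= #|F|)%N) => // i y _ Hy.
exact: leq_trans (geq_minr _ _) Hy.
Qed.

Lemma wtF_attained F x : wtF F x = #|F| \/
  exists A : {set {set 'I_n}}, [/\ A \subset F, supp x \subset cover A & wtF F x = #|A|].
Proof.
rewrite /wtF.
apply: (big_rec (fun y => y = #|F| \/ exists A : {set {set 'I_n}}, [/\ A \subset F, supp x \subset cover A & y = #|A|])); first by left.
move=> A y /andP[HA1 HA2] Hy.
case: (leqP #|A| y) => h.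
  by right; exists A; split => //=; rewrite /minn ltnNge h.
by [].
Qed.

Lemma bigmin_le (T : eqType) (r : seq T) (P : pred T) (f : T -> nat) d i :
  i \in r -> P i -> (\big[minn/d]_(j <- r | P j) f j <= f i)%N.
Proof.
elim: r => // a r IH; rewrite in_cons big_cons => /orP[/eqP<- ->|hi hP].
  exact: geq_minl.
case: (P a); last exact: IH.
exact: leq_trans (geq_minr _ _) (IH hi hP).
Qed.

Lemma wtF_min F x (A : {set {set 'I_n}}) : A \subset F -> supp x \subset cover A -> (wtF F x <= #|A|)%N.
Proof.
move=> h1 h2; rewrite /wtF; apply: bigmin_le; first exact: mem_index_enum.
by rewrite h1 h2.
Qed.

Lemma wtF_leP F x m : covering F ->
  reflect (exists A : {set {set 'I_n}}, [/\ A \subset F, supp x \subset cover A & (#|A| <= m)%N]) (wtF F x <= m)%N.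
Proof.
move=> cov; apply: (iffP idP).
  case: (wtF_attained F x) => [-> h|[A [h1 h2 ->]] h].
    by exists F; split => //; rewrite cov subsetT.
  by exists A.
by case=> A [h1 h2 h3]; apply: leq_trans (wtF_min h1 h2) h3.
Qed.

Lemma supp0 : supp (0 : 'rV[K]_n) = set0.
Proof. by apply/setP => i; rewrite !inE mxE eqxx. Qed.

Lemma supp_eq0 x : (supp x == set0) = (x == 0).
Proof.
apply/idP/idP => [/eqP h|/eqP->]; last by rewrite supp0.
apply/eqP/rowP => i; rewrite mxE; apply/eqP; apply/negPn/negP => hi.
by have := in_set0 i; rewrite -h inE hi.
Qed.

Lemma wtF_eq0 F x : covering F -> (wtF F x == 0%N) = (x == 0).
Proof.
move=> cov; rewrite -leqn0; apply/(wtF_leP _ _ cov)/idP.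
  case=> A [_ h2]; rewrite leqn0 cards_eq0 => /eqP HA.
  by move: h2; rewrite HA /cover big_set0 subset0 supp_eq0.
move=> /eqP->; exists set0; split; rewrite ?sub0set ?cards0 //.
by rewrite supp0 sub0set.
Qed.

Lemma wtF_eq1 F x : covering F ->
  (wtF F x == 1%N) = (x != 0) && [exists B in F, supp x \subset B].
Proof.
move=> cov; rewrite eqn_leq lt0n wtF_eq0 // andbC.
case: (boolP (x == 0)) => //= hx.
apply/(wtF_leP _ _ cov)/existsP.
  case=> A [h1 h2 h3].
  case: (posnP #|A|) => [/eqP|h0].
    rewrite cards_eq0 => /eqP HA; move: h2; rewrite HA /cover big_set0 subset0 supp_eq0.
    by rewrite (negbTE hx).
  have /cards1P [B HB] : #|A| == 1%N by rewrite eqn_leq h3 h0.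
  exists B; move: h1 h2; rewrite HB sub1set cover1 => -> ->; done.
case=> B /andP[h1 h2]; exists [set B]; split; rewrite ?sub1set ?cover1 ?cards1 //.
Qed.

Definition dist F (X : {set 'rV[K]_n}) (w : nat) : nat := #|[set c in X | wtF F c == w]|.

Lemma wenum_coef F X w : ((wenum F X)`_w).[1] = (dist F X w)%:R :> int.
Proof.
rewrite /wenum coef_sum horner_sum.
rewrite (eq_bigr (fun c => if wtF F c == w then 1 else 0)); last first.
  move=> c _; rewrite coefMXn coefC.
  case: (ltnP w (wtF F c)) => h.
    by rewrite (gtn_eqF h) horner0.
  rewrite subn_eq0 [wtF F c == w]eqn_leq h /=; case: (w <= wtF F c)%N; last by rewrite horner0.
  by rewrite hornerXn expr1n.
rewrite -big_mkcondr /= -sumr_const; apply: eq_bigl => c; by rewrite inE.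
Qed.

Lemma wenum_dist F X Y : wenum F X = wenum F Y -> forall w, dist F X w = dist F Y w.
Proof.
move=> h w; have := wenum_coef F X w; rewrite h wenum_coef => /eqP.
by rewrite eqr_nat => /eqP.
Qed.

Lemma sum_by_wt (V : nmodType) F (X : {set 'rV[K]_n}) (g : nat -> V) :
  \sum_(c in X) g (wtF F c) = \sum_(w < #|F|.+1) g w *+ dist F X w.
Proof.
pose p c := Ordinal (wtF_le_card F c : (wtF F c < #|F|.+1)%N).
rewrite (partition_big p predT) //; apply: eq_bigr => w _.
rewrite -sumr_const; apply: eq_big => c; last first.
  by move=> /andP[_ /eqP <-].
by rewrite inE; congr (_ && _); apply/eqP/eqP => [<-|h] //; apply: val_inj.
Qed.

Lemma maxwt_le F X Y : (forall w, dist F X w = dist F Y w) -> (maxwt F X <= maxwt F Y)%N.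
Proof.
move=> h; apply/bigmax_leqP => c cX.
have : (0 < dist F Y (wtF F c))%N.
  by rewrite -h card_gt0; apply/set0Pn; exists c; rewrite inE cX eqxx.
rewrite card_gt0 => /set0Pn [c' ]; rewrite inE => /andP[c'Y /eqP <-].
exact: leq_bigmax_cond.
Qed.

Lemma dist_wenum F X Y : (forall w, dist F X w = dist F Y w) -> wenum F X = wenum F Y.
Proof.
move=> h; have hm : maxwt F X = maxwt F Y.
  by apply/eqP; rewrite eqn_leq !maxwt_le.
rewrite /wenum hm.
rewrite (@sum_by_wt _ F _ (fun w => ('X ^+ (maxwt F Y - w) : {poly int})%:P * 'X ^+ w)).
rewrite (@sum_by_wt _ F _ (fun w => ('X ^+ (maxwt F Y - w) : {poly int})%:P * 'X ^+ w)).
by apply: eq_bigr => w _; rewrite h.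
Qed.


Definition dot (u v : 'rV[K]_n) : K := \sum_(i < n) u 0 i * v 0 i.

Definition ann (V : {vspace 'rV[K]_n}) : {set 'rV[K]_n} :=
  [set u : 'rV[K]_n | [forall c : 'rV[K]_n, (c \in V) ==> (dot u c == 0)]].

Lemma dotE u v : dot u v = (u *m v^T) 0 0.
Proof. by rewrite mxE; apply: eq_bigr => i _; rewrite mxE. Qed.

Lemma card_ann (V : {vspace 'rV[K]_n}) : (#|ann V| * #|V| = #|K| ^ n)%N.
Proof.
set d := \dim V; set b := vbasis V.
pose B : 'M[K]_(d, n) := \matrix_(l < d) b`_l.
have rowB l : row l B = b`_l by rewrite rowK.
have bV (l : 'I_d) : b`_l \in V.
  by apply: vbasis_mem; apply: mem_nth; rewrite size_tuple.
have annE : forall u, (u \in ann V) = (u *m B^T == 0).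
  move=> u; rewrite inE; apply/forallP/eqP => [h|h c].
    apply/rowP => l; have := h b`_l; rewrite bV /= => /eqP hl.
    rewrite [RHS]mxE -hl /dot mxE; apply: eq_bigr => j _; rewrite !mxE -rowB mxE; done.
  apply/implyP => cV; rewrite (coord_vbasis cV) dotE.
  pose w : 'rV[K]_d := \row_l coord b l c.
  have -> : \sum_(i < d) coord b i c *: b`_i = w *m B.
    by rewrite mulmx_sum_row; apply: eq_bigr => l _; rewrite rowB mxE.
  by rewrite trmx_mul mulmxA h mul0mx mxE.
have freeB : row_free B.
  rewrite -kermx_eq0; apply/eqP/row_matrixP => i; rewrite row0.
  have h : row i (kermx B) *m B = 0 by rewrite -row_mul mulmx_ker row0.
  move: h; rewrite mulmx_sum_row => h.
  have hf : free b := basis_free (vbasisP V).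
  move/freeP: hf => hf.
  apply/rowP => l; rewrite [RHS]mxE; apply: (hf (fun l => row i (kermx B) 0 l)).
  by apply: etrans h; apply: eq_bigr => l' _; rewrite rowB.
have fullBt : row_full B^T by rewrite /row_full mxrank_tr; exact: freeB.
have [X hX] := row_fullP fullBt.
pose f : 'Hom('rV[K]_n, 'rV[K]_d) := linfun (mulmxr B^T).
have kerE : ann V =i lker f.
  by move=> u; rewrite annE memv_ker lfunE.
have imgf : (f @: fullv)%VS = fullv.
  apply/eqP; rewrite eqEsubv subvf; apply/subvP => w _; apply/memv_imgP.
  by exists (w *m X); rewrite ?memvf // lfunE /= -mulmxA hX mulmx1.
have := limg_ker_dim f fullv; rewrite capfv imgf !dimvf !dim_matrix !mul1r => hd.
rewrite (eq_card kerE) !card_vspace -expnD; congr (_ ^ _)%N.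
by rewrite hd.
Qed.


Definition restr (S : {set 'I_n}) : 'M[K]_n := diag_mx (\row_j ((j \in S)%:R : K)).

Lemma restrE u S j : (u *m restr S) 0 j = if j \in S then u 0 j else 0.
Proof. by rewrite mul_mx_diag !mxE; case: (j \in S); rewrite ?mulr1 ?mulr0. Qed.

Definition projS (S : {set 'I_n}) : 'End('rV[K]_n) := linfun (mulmxr (restr S)).

Lemma projSE S u : projS S u = u *m restr S.
Proof. by rewrite lfunE. Qed.

Lemma mem_lker_projS S u : (u \in lker (projS S)) = (supp u \subset ~: S).
Proof.
rewrite memv_ker projSE; apply/eqP/subsetP => [h j|h].
  rewrite !inE => hu; apply/negP => hj.
  by move: hu; have := congr1 (fun v : 'rV[K]_n => v 0 j) h; rewrite restrE hj mxE => ->; rewrite eqxx.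
apply/rowP => j; rewrite restrE mxE; case: ifP => // hj.
apply/eqP; apply/negPn/negP => hu.
by have := h j; rewrite !inE hu hj => /(_ isT).
Qed.

Definition Z (T : {set 'I_n}) : {vspace 'rV[K]_n} := lker (projS (~: T)).

Lemma memZ u T : (u \in Z T) = (supp u \subset T).
Proof. by rewrite mem_lker_projS setCK. Qed.

Lemma card_supp (T : {set 'I_n}) : #|[set u : 'rV[K]_n | supp u \subset T]| = (#|K| ^ #|T|)%N.
Proof.
pose g (u : 'rV[K]_n) : {ffun 'I_n -> K} := [ffun j => u 0 j].
have ginj : injective g.
  by move=> u v h; apply/rowP => j; have := congr1 (fun f : {ffun 'I_n -> K} => f j) h; rewrite !ffunE.
rewrite -(card_imset _ ginj) -(card_pffun_on 0 T (predT : pred K)).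
apply: eq_card => f; apply/imsetP/pffun_onP.
  case=> u; rewrite inE => hu ->; split => //.
  apply/subsetP => j; rewrite !inE ffunE => hj; apply: (subsetP hu); rewrite inE.
  done.
case=> hs _; exists (\row_j f j).
  rewrite inE; apply/subsetP => j; rewrite inE mxE => hj; apply: (subsetP hs).
  by rewrite !inE.
by apply/ffunP => j; rewrite !ffunE mxE.
Qed.

Lemma card_Z T : #|Z T| = (#|K| ^ #|T|)%N.
Proof. by rewrite -card_supp; apply: eq_card => u; rewrite inE memZ. Qed.


Lemma supp_out u (T : {set 'I_n}) (j : 'I_n) : supp u \subset T -> j \notin T -> u 0 j = 0.
Proof.
move=> /subsetP h hj; apply/eqP; apply/negPn/negP => hu.
by have := h j; rewrite inE hu => /(_ isT); apply/negP.
Qed.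

Lemma dot_add u a b : dot u (a + b) = dot u a + dot u b.
Proof. by rewrite /dot -big_split; apply: eq_bigr => j _; rewrite mxE mulrDr. Qed.

Lemma dot_disj u v (S : {set 'I_n}) : supp u \subset S -> supp v \subset ~: S -> dot u v = 0.
Proof.
move=> hu hv; apply: big1 => j _; case: (boolP (j \in S)) => hj.
  by rewrite (supp_out hv) ?mulr0 // inE hj.
by rewrite (supp_out hu) ?mul0r.
Qed.

Lemma dot_restr u c (S : {set 'I_n}) : supp u \subset S -> dot u (c *m restr S) = dot u c.
Proof.
move=> hu; apply: eq_bigr => j _; rewrite restrE; case: ifP => // hj.
have hj' : j \notin S by rewrite hj.
by rewrite (supp_out hu hj') !mul0r.
Qed.

Lemma key (C : {vspace 'rV[K]_n}) (S : {set 'I_n}) :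
  (#|[set u in dual_code C | supp u \subset S]| * #|C|
   = #|K| ^ #|S| * #|[set c | (c \in C) && (supp c \subset ~: S)]|)%N.
Proof.
set P := projS S; set piC := (P @: C)%VS; set C0 := (C :&: lker P)%VS.
have hdim := limg_ker_dim P C.
have hdisj : (piC :&: Z (~: S))%VS = 0%VS.
  apply/eqP; rewrite -subv0; apply/subvP => v; rewrite memv_cap memv0.
  case/andP => /memv_imgP [c _ ->]; rewrite memZ => hz.
  apply/eqP/rowP => j; rewrite mxE; move: hz; rewrite projSE restrE => hz.
  case: ifP => hj //; have := @supp_out _ _ j hz; rewrite restrE inE hj; apply => //.
have hW := dimv_disjoint_sum hdisj.
set W := (piC + Z (~: S))%VS.
have annW : ann W =i [set u in dual_code C | supp u \subset S].
  move=> u; rewrite !inE; apply/forallP/andP => [h|[/forallP h hS] w].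
    have hS : supp u \subset S.
      apply/subsetP => j; rewrite inE => hj; apply/negPn/negP => hjS.
      have := h (delta_mx 0 j); rewrite (subvP (addvSr _ _)) /=; last first.
        rewrite memZ; apply/subsetP => l; rewrite !inE mxE.
        by case: (l == j) /eqP => [->|]; rewrite ?eqxx ?andbF ?andbT.
      rewrite /dot (bigD1 j) //= big1 ?addr0; first by rewrite mxE !eqxx mulr1 (negbTE hj).
      by move=> l hl; rewrite mxE (negbTE hl) andbF mulr0.
    split => //; apply/forallP => c; apply/implyP => cC.
    have := h (c *m restr S); rewrite (subvP (addvSl _ _)) /=; last first.
      by rewrite -projSE memv_img.
    by rewrite dot_restr.
  apply/implyP => /memv_addP [a /memv_imgP [c cC ->] [b hb ->]].
  have hb' : supp b \subset ~: S by rewrite -memZ.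
  rewrite dot_add projSE dot_restr // (dot_disj hS hb') addr0.
  by have := h c; rewrite cC.
have hann := card_ann W.
rewrite (eq_card annW) !card_vspace hW in hann.
have hZ := card_Z (~: S); rewrite card_vspace in hZ; rewrite expnD hZ in hann.
have hC0 : #|[set c | (c \in C) && (supp c \subset ~: S)]| = #|C0|.
  by apply: eq_card => c; rewrite inE memv_cap mem_lker_projS.
rewrite hC0 !card_vspace -hdim.
have hq : (#|K| ^ n = #|K| ^ #|S| * #|K| ^ #|~: S|)%N by rewrite -expnD cardsC card_ord.
move: hann; rewrite hq.
set a := #|[set u in _ | _]|; set q := #|K|.
rewrite mulnA expnD => /eqP; rewrite eqn_pmul2r ?expn_gt0 ?(ltnW (finNzRing_gt1 K)) // => /eqP h.
by rewrite mulnCA h mulnC.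
Qed.


Section Part.
Variable F : {set {set 'I_n}}.
Hypothesis hp : partition F [set: 'I_n].
Implicit Types (T : {set {set 'I_n}}) (A B : {set 'I_n}) (i : 'I_n).

Lemma part_cov : covering F.
Proof. exact: cover_partition hp. Qed.

Lemma part_uniq A B i : A \in F -> B \in F -> i \in A -> i \in B -> A = B.
Proof.
move=> hA hB hiA hiB; apply/eqP/negPn/negP => hne.
case/and3P: hp => _ /trivIsetP /(_ A B hA hB hne) hd _.
by move/pred0P: hd => /(_ i); rewrite /= hiA hiB.
Qed.

Lemma part_ex i : exists2 A, A \in F & i \in A.
Proof.
have : i \in cover F by rewrite part_cov inE.
by case/bigcupP => A hA hi; exists A.
Qed.

Definition blk x : {set {set 'I_n}} := [set A in F | [exists i in A, i \in supp x]].

Lemma blkF x : blk x \subset F.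
Proof. by apply/subsetP => A; rewrite inE => /andP[]. Qed.

Lemma blk_sub x T : T \subset F -> (blk x \subset T) = (supp x \subset cover T).
Proof.
move=> hT; apply/subsetP/subsetP => [h i hi|h A].
  have [A hA hiA] := part_ex i.
  apply/bigcupP; exists A => //; apply: h; rewrite inE hA /=.
  by apply/existsP; exists i; rewrite hiA.
rewrite inE => /andP[hA /existsP[i /andP[hiA hi]]].
case/bigcupP: (h i hi) => B hB hiB.
by rewrite (part_uniq hA (subsetP hT B hB) hiA hiB).
Qed.

Lemma wt_blk x : wtF F x = #|blk x|.
Proof.
apply/eqP; rewrite eqn_leq; apply/andP; split.
  by apply: wtF_min; rewrite ?blkF // -blk_sub ?blkF.
case: (wtF_attained F x) => [->|[A [h1 h2 ->]]].
  exact: subset_leq_card (blkF x).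
by apply: subset_leq_card; rewrite blk_sub.
Qed.

Lemma coverC T : T \subset F -> ~: cover T = cover (F :\: T).
Proof.
move=> hT; apply/setP => i; rewrite inE; apply/idP/idP.
  have [A hA hiA] := part_ex i => hni.
  apply/bigcupP; exists A => //; rewrite inE hA andbT; apply/negP => hAT.
  by move/negP: hni; apply; apply/bigcupP; exists A.
case/bigcupP => A; rewrite inE => /andP[hAT hA] hiA; apply/negP.
case/bigcupP => B hB hiB.
by move: hAT; rewrite (part_uniq hA (subsetP hT B hB) hiA hiB) hB.
Qed.

Lemma card_cover T k : T \subset F -> (forall A, A \in F -> #|A| = k) ->
  #|cover T| = (#|T| * k)%N.
Proof.
move=> hT hk; apply: card_uniform_partition.
  by move=> A hA; apply: hk; apply: (subsetP hT).
case/and3P: hp => _ htriv h0.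
rewrite /partition eqxx (trivIsetS hT htriv) /=.
by apply/negP => h; move/negP: h0; apply; apply: (subsetP hT).
Qed.

End Part.


Definition cfun (N w m : nat) : nat := if (w <= m)%N then 'C(N - w, m - w) else 0%N.

Lemma count_sup (F W : {set {set 'I_n}}) m : W \subset F ->
  #|[set T : {set {set 'I_n}} | [&& T \subset F, #|T| == m & W \subset T]]| = cfun #|F| #|W| m.
Proof.
move=> hWF; rewrite /cfun; case: leqP => hm; last first.
  apply: eq_card0 => T; rewrite inE; apply/negP => /and3P[_ /eqP hT hWT].
  by have := subset_leq_card hWT; rewrite hT leqNgt hm.
rewrite -(cardsDS hWF) -cards_draws.
have -> : [set T' : {set {set 'I_n}} | T' \subset F :\: W & #|T'| == (m - #|W|)%N] = (fun T => T :\: W) @: [set T : {set {set 'I_n}} | [&& T \subset F, #|T| == m & W \subset T]].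
  apply/setP => T'; rewrite inE; apply/idP/imsetP.
    case/andP => hT' /eqP hc.
    have hd : [disjoint T' & W] by move/subsetDP: hT' => [].
    exists (T' :|: W).
      rewrite inE subUset hWF subsetUr andbT /= (subset_trans hT' (subsetDl _ _)) /=.
      by rewrite cardsU (disjoint_setI0 hd) cards0 subn0 hc subnK // eqxx.
    apply/setP => x; rewrite !inE; case: (boolP (x \in W)) => hx; rewrite ?andbF ?andbT ?orbF //.
    by rewrite (disjointFl hd hx).
  case=> T; rewrite inE => /and3P[hTF /eqP hT hWT] ->.
  by rewrite setSD //= cardsDS // hT eqxx.
symmetry; apply: card_in_imset => T1 T2; rewrite !inE => /and3P[_ _ h1] /and3P[_ _ h2] he.
apply/setP => x; have := congr1 (fun S : {set {set 'I_n}} => x \in S) he; rewrite !inE.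
case: (boolP (x \in W)) => hx /=; last by [].
by rewrite (subsetP h1 x hx) (subsetP h2 x hx).
Qed.


Lemma sum_exch (P : pred {set {set 'I_n}}) (X : {set 'rV[K]_n})
  (g : 'rV[K]_n -> {set {set 'I_n}} -> bool) :
  (\sum_(T | P T) #|[set x in X | g x T]| = \sum_(x in X) #|[set T | P T && g x T]|)%N.
Proof.
transitivity (\sum_(T | P T) \sum_(x in X) (g x T : nat)).
  apply: eq_bigr => T _; rewrite -sum1_card big_mkcond /= [RHS]big_mkcond /=.
  by apply: eq_bigr => x _; rewrite inE; case: (x \in X); case: (g x T).
rewrite exchange_big; apply: eq_bigr => x _.
rewrite -sum1_card big_mkcond /= [RHS]big_mkcond /=.
by apply: eq_bigr => T _; rewrite inE; case: (P T); case: (g x T).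
Qed.

Lemma G_split F (D : {set 'rV[K]_n}) m :
  (\sum_(u in D) cfun #|F| (wtF F u) m
   = \sum_(u in D) (if (wtF F u < m)%N then cfun #|F| (wtF F u) m else 0%N) + dist F D m)%N.
Proof.
rewrite /dist -[#|[set c in D | _]|]sum1_card [LHS]big_mkcond [X in (X + _)%N]big_mkcond [X in (_ + X)%N]big_mkcond /=.
rewrite -big_split /=; apply: eq_bigr => u _; rewrite inE; case: (u \in D) => //=.
rewrite /cfun; case: (ltngtP (wtF F u) m) => h.
- by rewrite addn0.
- by [].
- by rewrite h subnn bin0.
Qed.

Lemma inv_dist F (D1 D2 : {set 'rV[K]_n}) :
  (forall m, \sum_(u in D1) cfun #|F| (wtF F u) m = \sum_(u in D2) cfun #|F| (wtF F u) m)%N ->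
  forall w, dist F D1 w = dist F D2 w.
Proof.
move=> hG; elim/ltn_ind => w IH.
have := G_split F D1 w; have := G_split F D2 w; rewrite hG => -> /eqP.
rewrite (@sum_by_wt _ F D1 (fun w' => if (w' < w)%N then cfun #|F| w' w else 0%N)).
rewrite (@sum_by_wt _ F D2 (fun w' => if (w' < w)%N then cfun #|F| w' w else 0%N)).
have hS : \sum_(w' < #|F|.+1) (if (w' < w)%N then cfun #|F| w' w else 0%N) *+ dist F D1 w'
  = \sum_(w' < #|F|.+1) (if (w' < w)%N then cfun #|F| w' w else 0%N) *+ dist F D2 w'.
  by apply: eq_bigr => w' _; case: ifP => h; [rewrite IH | rewrite !mul0rn].
by rewrite hS eqn_add2l => /eqP ->.
Qed.

Section PartK.
Variable F : {set {set 'I_n}}.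
Hypothesis hp : partition F [set: 'I_n].
Variable k : nat.
Hypothesis hk : forall A, A \in F -> #|A| = k.

Lemma key_blk (C : {vspace 'rV[K]_n}) (T : {set {set 'I_n}}) : T \subset F ->
  (#|[set u in dual_code C | blk F u \subset T]| * #|C|
   = #|K| ^ (#|T| * k) * #|[set c in code_set C | blk F c \subset F :\: T]|)%N.
Proof.
move=> hT; have := key C (cover T); rewrite (card_cover hp hT hk).
have -> : #|[set u in dual_code C | supp u \subset cover T]| = #|[set u in dual_code C | blk F u \subset T]|.
  by apply: eq_card => u; rewrite !inE blk_sub.
have -> : #|[set c | (c \in C) && (supp c \subset ~: cover T)]| = #|[set c in code_set C | blk F c \subset F :\: T]|.
  by apply: eq_card => c; rewrite !inE (coverC hp hT) blk_sub // subsetDl.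
done.
Qed.

Lemma G_eq (C : {vspace 'rV[K]_n}) m :
  ((\sum_(u in dual_code C) cfun #|F| (wtF F u) m) * #|C|
   = #|K| ^ (m * k) * \sum_(c in code_set C) 'C(#|F| - wtF F c, m))%N.
Proof.
have L : (\sum_(T : {set {set 'I_n}} | (T \subset F) && (#|T| == m))
             #|[set u in dual_code C | blk F u \subset T]| * #|C|
          = \sum_(T : {set {set 'I_n}} | (T \subset F) && (#|T| == m))
             #|K| ^ (m * k) * #|[set c in code_set C | blk F c \subset F :\: T]|)%N.
  by apply: eq_bigr => T /andP[hT /eqP hm]; rewrite key_blk // hm.
rewrite -big_distrl -big_distrr /= !sum_exch in L.
have e1 : \sum_(u in dual_code C) cfun #|F| (wtF F u) m
  = \sum_(u in dual_code C) #|[set T : {set {set 'I_n}} | (T \subset F) && (#|T| == m) & blk F u \subset T]|.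
  apply: eq_bigr => u _; rewrite (wt_blk hp) -count_sup ?blkF //.
  by apply: eq_card => T; rewrite !inE andbA.
have e2 : \sum_(c in code_set C) 'C(#|F| - wtF F c, m)
  = \sum_(c in code_set C) #|[set T : {set {set 'I_n}} | (T \subset F) && (#|T| == m) & blk F c \subset F :\: T]|.
  apply: eq_bigr => c _.
  rewrite (wt_blk hp) -(cardsDS (blkF F c)) -cards_draws; apply: eq_card => T.
  by rewrite !inE !subsetD blkF disjoint_sym /= andbAC.
by rewrite e1 e2.
Qed.


Lemma card_code (C : {vspace 'rV[K]_n}) :
  #|C| = (\sum_(w < #|F|.+1) 1 *+ dist F (code_set C) w)%N.
Proof.
rewrite -(@sum_by_wt _ F (code_set C) (fun _ => 1%N)) sum1_card.
by apply: eq_card => c; rewrite inE.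
Qed.

Lemma part_macw : admits_MacWilliams K F.
Proof.
move=> C1 C2 hW; have hd := wenum_dist hW.
apply: dist_wenum; apply: inv_dist => m.
have e1 := G_eq C1 m; have e2 := G_eq C2 m.
have hH : (\sum_(c in code_set C1) 'C(#|F| - wtF F c, m)
          = \sum_(c in code_set C2) 'C(#|F| - wtF F c, m))%N.
  rewrite (@sum_by_wt _ F (code_set C1) (fun w => 'C(#|F| - w, m))).
  rewrite (@sum_by_wt _ F (code_set C2) (fun w => 'C(#|F| - w, m))).
  by apply: eq_bigr => w _; rewrite hd.
have hC : #|C1| = #|C2|.
  by rewrite !card_code; apply: eq_bigr => w _; rewrite hd.
have hpos : (0 < #|C2|)%N by apply/card_gt0P; exists 0; exact: mem0v.
apply/eqP; rewrite -(eqn_pmul2r hpos); apply/eqP.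
by rewrite -{1}hC e1 e2 hH.
Qed.

End PartK.


Section Fwd.
Variable F : {set {set 'I_n}}.
Hypothesis cov : covering F.

Definition wt1 (u : 'rV[K]_n) : bool := (u != 0) && [exists B in F, supp u \subset B].

Lemma wt1E u : (wtF F u == 1%N) = wt1 u.
Proof. exact: wtF_eq1. Qed.

Lemma supp_scale (a : K) u : a != 0 -> supp (a *: u) = supp u.
Proof. by move=> ha; apply/setP => j; rewrite !inE mxE mulf_eq0 negb_or ha. Qed.

Lemma line_dist x : wt1 x -> forall w,
  dist F (code_set <[x]>%VS) w = #|[set a : K | (a != 0 : nat) == w]|.
Proof.
case/andP => hx hB w.
have inj : injective (fun a : K => a *: x).
  move=> a b /eqP; rewrite -subr_eq0 -scalerBl scaler_eq0 (negbTE hx) orbF subr_eq0.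
  by move/eqP.
rewrite -(card_imset _ inj); apply: eq_card => c; rewrite !inE.
apply/andP/imsetP => [[/vlineP [a ->] hw]|[a ha ->]].
  exists a => //; rewrite inE; move: hw; case: (boolP (a == 0)) => [/eqP->|ha].
    by rewrite scale0r; have := @wtF_eq0 F (0 : 'rV[K]_n) cov; rewrite eqxx => /eqP ->.
  have : wtF F (a *: x) == 1%N by rewrite wt1E /wt1 scaler_eq0 negb_or ha hx supp_scale.
  by move/eqP => ->.
split; first by apply/vlineP; exists a.
move: ha; rewrite inE; case: (boolP (a == 0)) => [/eqP->|ha].
  by rewrite scale0r; have := @wtF_eq0 F (0 : 'rV[K]_n) cov; rewrite eqxx => /eqP ->.
have : wtF F (a *: x) == 1%N by rewrite wt1E /wt1 scaler_eq0 negb_or ha hx supp_scale.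
by move/eqP => ->.
Qed.

Lemma line_wenum x y : wt1 x -> wt1 y ->
  wenum F (code_set <[x]>%VS) = wenum F (code_set <[y]>%VS).
Proof. by move=> hx hy; apply: dist_wenum => w; rewrite line_dist // line_dist. Qed.

Lemma dual_line x : dual_code <[x]>%VS = [set u | dot u x == 0].
Proof.
apply/setP => u; rewrite !inE; apply/forallP/idP => [h|h c].
  by have := h x; rewrite memv_line.
apply/implyP => /vlineP [a ->].
have -> : \sum_(i < n) u 0 i * (a *: x) 0 i = a * dot u x.
  by rewrite /dot mulr_sumr; apply: eq_bigr => i _; rewrite mxE mulrCA.
by rewrite (eqP h) mulr0.
Qed.

Lemma dual_line_dist1 x :
  dist F (dual_code <[x]>%VS) 1 = #|[set u | (dot u x == 0) && wt1 u]|.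
Proof. by apply: eq_card => u; rewrite dual_line !inE wt1E. Qed.

Lemma no_macw x y : wt1 x -> wt1 y ->
  #|[set u | (dot u x == 0) && wt1 u]| != #|[set u | (dot u y == 0) && wt1 u]| ->
  ~ admits_MacWilliams K F.
Proof.
move=> hx hy hne hM.
have := hM _ _ (line_wenum hx hy) => /wenum_dist /(_ 1%N).
by rewrite !dual_line_dist1 => he; rewrite he eqxx in hne.
Qed.


Lemma dot_delta u i : dot u (delta_mx 0 i) = u 0 i.
Proof.
rewrite /dot (bigD1 i) //= big1 ?addr0; first by rewrite mxE !eqxx mulr1.
by move=> l hl; rewrite mxE (negbTE hl) andbF mulr0.
Qed.

Lemma case1 A B i j : A \in F -> B \in F -> j \in A -> j \in B -> i \in B -> i \notin A ->
  (forall C, C \in F -> ~~ (A \proper C)) -> ~ admits_MacWilliams K F.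
Proof.
move=> hA hB hjA hjB hiB hiA hnr.
have hij : i != j by apply/eqP => e; rewrite e hjA in hiA.
have hji : (j == i) = false by rewrite eq_sym (negbTE hij).
pose ei : 'rV[K]_n := delta_mx 0 i; pose ej : 'rV[K]_n := delta_mx 0 j.
have eiE l : ei 0 l = (l == i)%:R by rewrite mxE eqxx.
have ejE l : ej 0 l = (l == j)%:R by rewrite mxE eqxx.
have hx : wt1 ei.
  rewrite /wt1; apply/andP; split.
    by apply/eqP => /rowP /(_ i); rewrite eiE mxE eqxx => /eqP; rewrite oner_eq0.
  apply/existsP; exists B; rewrite hB /=; apply/subsetP => l; rewrite inE eiE.
  by case: (l == i) /eqP => [->|]; rewrite ?eqxx.
have hy : wt1 (ei + ej).
  rewrite /wt1; apply/andP; split.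
    apply/eqP => /rowP /(_ i); rewrite mxE eiE ejE mxE eqxx (negbTE hij) addr0.
    by move/eqP; rewrite oner_eq0.
  apply/existsP; exists B; rewrite hB /=; apply/subsetP => l; rewrite inE mxE eiE ejE.
  by case: (l == i) /eqP => [->|_] //; case: (l == j) /eqP => [->|_] //; rewrite addr0 eqxx.
apply: (no_macw hx hy).
set W1 := [set u | _]; set W2 := [set u | _].
pose phi (u : 'rV[K]_n) := u *m restr (~: [set i]).
have phiE u l : phi u 0 l = if l == i then 0 else u 0 l.
  by rewrite restrE !inE; case: (l == i).
have inW2 u : u \in W2 -> u 0 i = - u 0 j.
  rewrite inE dot_add !dot_delta => /andP[/eqP h _].
  by apply/eqP; rewrite -subr_eq0 opprK h.
have phi_inj : {in W2 &, injective phi}.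
  move=> u v hu hv he; apply/rowP => l.
  have := congr1 (fun w : 'rV[K]_n => w 0 l) he; rewrite !phiE.
  case: (l == i) /eqP => [-> _|//].
  rewrite (inW2 u hu) (inW2 v hv).
  by have := congr1 (fun w : 'rV[K]_n => w 0 j) he; rewrite !phiE hji => ->.
have sub : phi @: W2 \proper W1.
  apply/properP; split.
    apply/subsetP => _ /imsetP [u hu ->].
    have := hu; rewrite inE => /andP[_ /andP[hu0 /existsP [C /andP[hC hsC]]]].
    rewrite inE dot_delta phiE eqxx eqxx /=; apply/andP; split.
      apply/negP => /eqP h0; move/negP: hu0; apply; apply/eqP/rowP => l.
      have h0l m : u 0 m = 0 \/ m = i.
        case: (m =P i) => [->|hm]; [by right|left].
        by have := congr1 (fun w : 'rV[K]_n => w 0 m) h0; rewrite phiE mxE; case: (m =P i).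
      rewrite mxE; case: (h0l l) => // ->.
      rewrite (inW2 u hu); case: (h0l j) => [->|e]; first by rewrite oppr0.
      by rewrite e eqxx in hji.
    apply/existsP; exists C; rewrite hC /=; apply/subsetP => l; rewrite inE phiE.
    case: (l == i) => //; first by rewrite eqxx.
    by move=> hl; apply: (subsetP hsC); rewrite inE.
  pose w : 'rV[K]_n := \row_l ((l \in A)%:R).
  have wE l : w 0 l = (l \in A)%:R by rewrite mxE.
  exists w.
    rewrite inE dot_delta wE (negbTE hiA) eqxx /=; apply/andP; split.
      by apply/eqP => /rowP /(_ j); rewrite wE mxE hjA => /eqP; rewrite oner_eq0.
    apply/existsP; exists A; rewrite hA /=; apply/subsetP => l; rewrite inE wE.
    by case: (l \in A) => //; rewrite eqxx.
  apply/imsetP => [[u hu e]].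
  have := hu; rewrite inE => /andP[_ /andP[hu0 /existsP [C /andP[hC hsC]]]].
  have uj : u 0 j = 1.
    by have := congr1 (fun v : 'rV[K]_n => v 0 j) e; rewrite wE phiE hji hjA => <-.
  have hiC : i \in C.
    apply: (subsetP hsC); rewrite inE (inW2 u hu) uj oppr_eq0 oner_eq0 //.
  move/negP: (hnr C hC); apply; apply/properP; split; last by exists i.
  apply/subsetP => l hl; apply: (subsetP hsC); rewrite inE.
  have hli : (l == i) = false by apply/negbTE; apply/eqP => el; move: hiA; rewrite -el hl.
  have := congr1 (fun v : 'rV[K]_n => v 0 l) e; rewrite wE phiE hli hl => <-.
  by rewrite oner_eq0.
by rewrite -(card_in_imset phi_inj) (gtn_eqF (proper_card sub)).
Qed.


Lemma cnt_i (hp : partition F [set: 'I_n]) (P : {set 'I_n}) i : P \in F -> i \in P ->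
  #|[set u | (dot u (delta_mx 0 i) == 0) && wt1 u]|
   = (#|[set u | wt1 u]| - (#|K| ^ #|P| - #|K| ^ (#|P|).-1))%N
  /\ (#|K| ^ #|P| - #|K| ^ (#|P|).-1 <= #|[set u | wt1 u]|)%N.
Proof.
move=> hP hiP.
have key1 u : wt1 u -> (supp u \subset P) && ~~ (supp u \subset P :\ i) = (u 0 i != 0).
  case/andP => hu0 /existsP [C /andP[hC hsC]].
  apply/idP/idP.
    case/andP => hsP /subsetPn [l hl hlPi].
    move: hlPi; rewrite !inE (subsetP hsP l hl) andbT negbK => /eqP el.
    by move: hl; rewrite inE el.
  move=> hui.
  have hiC : i \in C by apply: (subsetP hsC); rewrite inE.
  have eCP := part_uniq hp hC hP hiC hiP.
  rewrite -eCP hsC /=; apply/subsetPn; exists i; first by rewrite inE.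
  by rewrite !inE eqxx.
set U1 := [set u | wt1 u].
set ZP := [set u : 'rV[K]_n | supp u \subset P].
set ZPi := [set u : 'rV[K]_n | supp u \subset P :\ i].
have sZ : ZPi \subset ZP.
  apply/subsetP => u; rewrite !inE => h; apply: subset_trans h _; exact: subsetDl.
have sU : ZP :\: ZPi \subset U1.
  apply/subsetP => u; rewrite !inE => /andP[hn hs]; apply/andP; split.
    apply/negP => /eqP u0; move: hn; rewrite u0 supp0 sub0set.
    done.
  by apply/existsP; exists P; rewrite hP.
have e : [set u | (dot u (delta_mx 0 i) == 0) && wt1 u] = U1 :\: (ZP :\: ZPi).
  apply/setP => u; rewrite !inE dot_delta.
  case: (boolP (wt1 u)) => hu; rewrite ?andbF ?andbT //=.
  by rewrite andbC key1 // negbK.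
have hc : #|ZP :\: ZPi| = (#|K| ^ #|P| - #|K| ^ (#|P|).-1)%N.
  rewrite cardsDS // /ZP /ZPi !card_supp; congr (_ - _ ^ _)%N.
  by rewrite (cardsD1 i P) hiP.
rewrite e cardsDS // hc; split => //.
by rewrite -hc; apply: subset_leq_card.
Qed.

Lemma case2 (hp : partition F [set: 'I_n]) P Q : P \in F -> Q \in F ->
  (#|P| < #|Q|)%N -> ~ admits_MacWilliams K F.
Proof.
move=> hP hQ hlt.
have ne0 R : R \in F -> exists i, i \in R.
  move=> hR; apply/set0Pn; apply/negP => /eqP e.
  by case/and3P: hp => _ _; rewrite -e hR.
have [i hiP] := ne0 P hP; have [j hjQ] := ne0 Q hQ.
have w1 R l : R \in F -> l \in R -> wt1 (delta_mx 0 l).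
  move=> hR hl; rewrite /wt1; apply/andP; split.
    by apply/eqP => /rowP /(_ l); rewrite !mxE !eqxx => /eqP; rewrite oner_eq0.
  apply/existsP; exists R; rewrite hR /=; apply/subsetP => l'; rewrite inE mxE eqxx /=.
  by case: (l' == l) /eqP => [->|]; rewrite ?eqxx.
apply: (no_macw (w1 _ _ hP hiP) (w1 _ _ hQ hjQ)).
have [e1 l1] := cnt_i hp hP hiP; have [e2 l2] := cnt_i hp hQ hjQ.
rewrite e1 e2; apply/negP => /eqP he.
have : (#|K| ^ #|P| - #|K| ^ (#|P|).-1 = #|K| ^ #|Q| - #|K| ^ (#|Q|).-1)%N.
  by rewrite -(subKn l1) -(subKn l2) he.
have qgt1 := finNzRing_gt1 K.
have hPpos : (0 < #|P|)%N by apply/card_gt0P; exists i.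
case: #|P| hPpos hlt => // a _; case: #|Q| => // b hab.
have f c : (#|K| ^ c.+1 - #|K| ^ c = #|K| ^ c * (#|K| - 1))%N.
  by rewrite expnS mulnBr muln1 mulnC.
rewrite /= !f => /eqP; rewrite eqn_pmul2r ?subn_gt0 // eqn_exp2l // => /eqP e.
by rewrite e ltnn in hab.
Qed.

End Fwd.

End Gen.

Theorem theorem1 (K : finFieldType) (n : nat) (F : {set {set 'I_n}}) :
  (1 <= n)%N ->
  covering F ->
  (forall A : {set 'I_n}, ~ redundant F A) ->
  admits_MacWilliams K F <-> exists k : nat, k_partition F k.
Proof.
move=> hn cov hnr; split; last first.
  by case=> k [hp hk]; exact: (part_macw hp hk).
move=> hM.
have nr A B : A \in F -> B \in F -> ~~ (A \proper B).
  by move=> hA hB; apply/negP => hAB; apply: (hnr A); split => //; exists B.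
have hp : partition F [set: 'I_n].
  rewrite /partition cov eqxx /=; apply/andP; split.
    apply/trivIsetP => A B hA hB hne; rewrite -setI_eq0; apply/negPn/negP.
    case/set0Pn => j; rewrite inE => /andP[hjA hjB].
    have : ~~ (B \subset A).
      apply/negP => hBA; move/negP: (nr B A hB hA); apply.
      by rewrite properEneq eq_sym hne hBA.
    case/subsetPn => i hiB hiA.
    exact: (case1 cov hA hB hjA hjB hiB hiA (fun C hC => nr A C hA hC) hM).
  apply/negP => h0; pose i0 := Ordinal hn.
  have : i0 \in cover F by rewrite cov inE.
  case/bigcupP => A hA hiA; move/negP: (nr set0 A h0 hA); apply.
  by rewrite proper0; apply/set0Pn; exists i0.
pose i0 := Ordinal hn; have [A0 hA0 _] := part_ex hp i0.
exists #|A0|; split => // A hA.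
case: (ltngtP #|A| #|A0|) => h //.
  by exfalso; exact: (case2 cov hp hA hA0 h hM).
by exfalso; exact: (case2 cov hp hA0 hA h hM).
Qed.
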